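(* Consider the system and safe set $\mathcal{C}=\{x: h(x)\ge 0\}$ described in the context. Suppose that: (i) Assumptions A, B$'$ and C$'$ (see context) hold; (ii) there exist positive constants $\gamma,\epsilon_1,\epsilon_2,\gamma_\theta,\gamma_\lambda>0$ such that for every $x\in\mathcal{C}$ the set $$K_{BF}^g(x)=\{\mathfrak{u}\in\mathbb{R}:\Psi_0(x)+\Psi_1(x)\mathfrak{u}\geq0\}$$ is non-empty, where $\Psi_0=\mathcal{M}+h_{x_2}f_\theta^0-(\epsilon_1+\epsilon_2)+\gamma\big(h-\frac{\bar\mu^2}{2\gamma_\theta}-\frac{\bar\nu^2}{2\gamma_\lambda}\big)$ and $\Psi_1=h_{x_2}(g+g_\lambda^0)h_{x_2}^\top$; (iii) the scalar estimates $\hat\mu,\hat\nu$ evolve according to $$\dot{\hat\mu}=-\gamma\hat\mu+\gamma_\theta\|h_{x_2}\|\|\Omega_\varphi\|,\qquad \dot{\hat\nu}=-\gamma\hat\nu+\gamma_\lambda\|h_{x_2}\|^2|u_0|\|\Omega_\psi\|,$$ with $\hat\mu(0)>0$, $\hat\nu(0)>0$, where $u_0\in\mathbb{R}$ is a Lipschitz function satisfying $u_0\in K_{BF}^g(x)$; (iv) $h(x(0))\geq\frac{\hat\mu(0)^2+\bar\mu^2}{2\gamma_\theta}+\frac{\hat\nu(0)^2+\bar\nu^2}{2\gamma_\lambda}$. Then the control input $u=s_g(u_0)h_{x_2}^\top\in\mathbb{R}^n$, where $$s_g(u_0)=u_0+\frac{\kappa_{1,g}}{b^*}+\frac{\kappa_{2,g}^2u_0^2}{b^*(\kappa_{2,g}\|h_{x_2}\||u_0|+\epsilon_2)},\quad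 \kappa_{1,g}=\frac{\hat\mu^2\|\Omega_\varphi\|^2}{\hat\mu\|\Omega_\varphi\|\|h_{x_2}\|+\epsilon_1},\quad\kappa_{2,g}=\hat\nu\|\Omega_\psi\|\|h_{x_2}\|,$$ ensures $h(x(t))\geq0$ for all $t>0$ along the closed-loop trajectory.
   Context: Let $m\ge0$, $n\ge1$, $[n]=\{1,\dots,n\}$, state $x=(x_1,x_2)\in\mathbb{R}^{m+n}$ ($x_2\in\mathbb{R}^n$), input $u\in\mathbb{R}^n$, system $$\dot x=f(x)+f_u(x)+\begin{pmatrix}0_m\\ f_\theta(x)\end{pmatrix}+\begin{pmatrix}0_{m\times n}\\ g(x)+g_\lambda(x)\end{pmatrix}u,$$ with $f$ known Lipschitz, $f_u$ unknown Lipschitz (both $\mathbb{R}^{m+n}\to\mathbb{R}^{m+n}$), $f_\theta(x)=[\theta_1^\top\varphi_1(x),\dots,\theta_n^\top\varphi_n(x)]^\top$ with known $\varphi_i:\mathbb{R}^{m+n}\to\mathbb{R}^{p_i}$ and unknown $\theta_i\in\mathbb{R}^{p_i}$; $g,g_\lambda$ are $n\times n$ matrices (not necessarily diagonal) with entries $(g)_{ij}=g_{ij}(x)$, $(g_\lambda)_{ij}=\lambda_{ij}^\top\psi_{ij}(x)$, with known $g_{ij}:\mathbb{R}^{m+n}\to\mathbb{R}$, $\psi_{ij}:\mathbb{R}^{m+n}\to\mathbb{R}^{q_{ij}}$ and unknown $\lambda_{ij}\in\mathbb{R}^{q_{ij}}$. $h:\mathbb{R}^{m+n}\to\mathbb{R}$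 is continuously differentiable, $h_x=\partial h/\partial x$, $h_{x_2}=\partial h/\partial x_2$ are row vectors with entries $h_{x,j}$. Norms: Euclidean for vectors. Vector inequalities are entrywise. Assumption A: known $\underline f_u,\overline f_u$ with $\underline f_u(x)\le f_u(x)\le\overline f_u(x)$ for all $x$ (entries $\underline f_{u,j},\overline f_{u,j}$). Assumption B$'$: known vectors with $\underline\theta_i\le\theta_i\le\overline\theta_i$ and $\underline\lambda_{ij}\le\lambda_{ij}\le\overline\lambda_{ij}$ for all $i,j\in[n]$. Assumption C$'$: with $\tilde g=g+g_\lambda$, there is a compact set $\mathcal{X}\supset\mathcal{C}$ and a constant $b^*>0$ such that for all $x\in\mathcal{X}$ the matrix $\frac{\tilde g(x)+\tilde g(x)^\top}{2}$ is positive definite with smallest singular value at least $b^*$. Fix nominal values $\theta_i^0\in[\underline\theta_i,\overline\theta_i]$, $\lambda_{ij}^0\in[\underline\lambda_{ij},\overline\lambda_{ij}]$ (entrywise). Let $\Theta=[\theta_1^\top,\dots,\theta_n^\top]^\top$, $\Theta^0=[\theta_1^{0\top},\dots,\theta_n^{0\top}]^\top$, $\Lambda=[\lambda_{11}^\top,\lambda_{12}^\top,\dots,\lambda_{nn}^\top]^\top$, $\Lambda^0$ analogously, $\Omega_\varphi=[\varphi_1^\top,\dots,\varphi_n^\top]^\top$, $\Omega_\psi=[\psi_{11}^\top,\psi_{12}^\top,\dots,\psi_{nn}^\top]^\top$, $f_\theta^0=[\theta_1^{0\top}\varphi_1,\dots,\theta_n^{0\top}\varphi_n]^\top$, and $g_\lambda^0$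 the $n\times n$ matrix with entries $\lambda_{ij}^{0\top}\psi_{ij}$. With $\overline\Theta,\underline\Theta,\overline\Lambda,\underline\Lambda$ the correspondingly stacked bound vectors, $M=\sum_i p_i$, $N=\sum_{i,j}q_{ij}$, set $\bar\mu=\sqrt{\sum_{j=1}^M\max\{(\overline\Theta_j-\Theta^0_j)^2,(\underline\Theta_j-\Theta^0_j)^2\}}$, $\bar\nu=\sqrt{\sum_{j=1}^N\max\{(\overline\Lambda_j-\Lambda^0_j)^2,(\underline\Lambda_j-\Lambda^0_j)^2\}}$. Define $\mathcal{M}(x)=h_x f+\sum_{j=1}^{m+n}\min\{h_{x,j}\underline f_{u,j},h_{x,j}\overline f_{u,j}\}$. *)

(* Defs.v *)
From HB Require Import structures.
From mathcomp Require Import all_boot all_order all_algebra.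
From mathcomp Require Import all_classical all_reals all_analysis.
Set Implicit Arguments. Unset Strict Implicit. Unset Printing Implicit Defensive.
Import Order.TTheory GRing.Theory Num.Theory.
Import numFieldNormedType.Exports.
Local Open Scope ring_scope.
Local Open Scope classical_set_scope.

Section Defs.
Variable R : realType.

Definition enorm (a b : nat) (A : 'M[R]_(a, b)) : R :=
  Num.sqrt (\sum_i \sum_j A i j ^+ 2).

Definition lipschitz_eucl (a b : nat) (F : 'cV[R]_a -> 'cV[R]_b) : Prop :=
  exists L : R, forall y z, enorm (F y - F z) <= L * enorm (y - z).

Definition lipschitz_eucl_scalar (a : nat) (F : 'cV[R]_a -> R) : Prop :=
  exists L : R, forall y z, `|F y - F z| <= L * enorm (y - z).

Definition sigma_min (k : nat) (A : 'M[R]_k) : R :=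
  inf [set enorm (A *m v) | v in [set v : 'cV[R]_k | enorm v = 1]].

Definition posdef (k : nat) (A : 'M[R]_k) : Prop :=
  forall v : 'cV[R]_k, v != 0 -> 0 < (v^T *m A *m v) 0 0.

Definition sym_part (k : nat) (A : 'M[R]_k) : 'M[R]_k := (2%:R)^-1 *: (A + A^T).

Definition grad (N : nat) (h : 'cV[R]_N -> R) (y : 'cV[R]_N) : 'rV[R]_N :=
  \row_j 'D_(delta_mx j 0) h y.

Definition grad2 (m n : nat) (h : 'cV[R]_(m + n) -> R) (y : 'cV[R]_(m + n)) : 'rV[R]_n :=
  rsubmx (grad h y).

Definition safe_set (N : nat) (h : 'cV[R]_N -> R) : set 'cV[R]_N := [set y | 0 <= h y].

Section Param.
Variables (N n : nat) (p : 'I_n -> nat) (q : 'I_n -> 'I_n -> nat).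

Definition f_theta (phi : forall i : 'I_n, 'cV[R]_N -> 'I_(p i) -> R)
  (th : forall i : 'I_n, 'I_(p i) -> R) (y : 'cV[R]_N) : 'cV[R]_n :=
  \col_i \sum_(k < p i) th i k * phi i y k.

Definition g_lambda (psi : forall i j : 'I_n, 'cV[R]_N -> 'I_(q i j) -> R)
  (lam : forall i j : 'I_n, 'I_(q i j) -> R) (y : 'cV[R]_N) : 'M[R]_n :=
  \matrix_(i, j) \sum_(k < q i j) lam i j k * psi i j y k.

(* ||Omega_phi(y)||, ||Omega_psi(y)|| (Euclidean norms of stacked vectors) *)
Definition norm_Omega_phi (phi : forall i : 'I_n, 'cV[R]_N -> 'I_(p i) -> R)
  (y : 'cV[R]_N) : R :=
  Num.sqrt (\sum_i \sum_(k < p i) phi i y k ^+ 2).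

Definition norm_Omega_psi (psi : forall i j : 'I_n, 'cV[R]_N -> 'I_(q i j) -> R)
  (y : 'cV[R]_N) : R :=
  Num.sqrt (\sum_i \sum_j \sum_(k < q i j) psi i j y k ^+ 2).

Definition mu_bar (th_lo th_hi th0 : forall i : 'I_n, 'I_(p i) -> R) : R :=
  Num.sqrt (\sum_i \sum_(k < p i)
    Num.max ((th_hi i k - th0 i k) ^+ 2) ((th_lo i k - th0 i k) ^+ 2)).

Definition nu_bar (lam_lo lam_hi lam0 : forall i j : 'I_n, 'I_(q i j) -> R) : R :=
  Num.sqrt (\sum_i \sum_j \sum_(k < q i j)
    Num.max ((lam_hi i j k - lam0 i j k) ^+ 2) ((lam_lo i j k - lam0 i j k) ^+ 2)).
End Param.

Definition Mfun (N : nat) (h : 'cV[R]_N -> R) (f fu_lo fu_hi : 'cV[R]_N -> 'cV[R]_N)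
  (y : 'cV[R]_N) : R :=
  (grad h y *m f y) 0 0 +
  \sum_j Num.min (grad h y 0 j * fu_lo y j 0) (grad h y 0 j * fu_hi y j 0).

Definition s_g (bstar eps1 eps2 muh nuh nOphi nOpsi nhx2 u0v : R) : R :=
  let k1 := muh ^+ 2 * nOphi ^+ 2 / (muh * nOphi * nhx2 + eps1) in
  let k2 := nuh * nOpsi * nhx2 in
  u0v + k1 / bstar + k2 ^+ 2 * u0v ^+ 2 / (bstar * (k2 * nhx2 * `|u0v| + eps2)).

End Defs.

(* Main.v *)
Require Import Defs.
From HB Require Import structures.
From mathcomp Require Import all_boot all_order all_algebra.
From mathcomp Require Import all_classical all_reals all_analysis.
From mathcomp Require Import ring lra.
Set Implicit Arguments. Unset Strict Implicit. Unset Printing Implicit Defensive.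
Import Order.TTheory GRing.Theory Num.Theory.
Import numFieldNormedType.Exports.
Local Open Scope ring_scope.
Local Open Scope classical_set_scope.
Section Alg.
Variable R : realType.

Lemma disc (a b c : R) : 0 <= a -> (forall t, 0 <= a * t ^+ 2 + 2 * b * t + c) ->
  b ^+ 2 <= a * c.
Proof.
move=> a0 H; have [a00|a0'] := eqVneq a 0.
  rewrite a00 mul0r; move: H; rewrite a00 => H.
  have [b0|bn0] := eqVneq b 0; first by rewrite b0 expr0n /=.
  have := H (- (c + 1) / (2 * b)).
  have -> : 2 * b * (- (c + 1) / (2 * b)) = - (c + 1).
    by field.
  rewrite mul0r; lra.
have ap : 0 < a by rewrite lt_def a0' a0.
have := H (- b / a); rewrite -(@ler_pM2r _ a) // mul0r.
have -> : (a * (- b / a) ^+ 2 + 2 * b * (- b / a) + c) * a = a * c - b ^+ 2.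
  by field.
lra.
Qed.

Lemma CS (I : finType) (a b : I -> R) :
  \sum_i a i * b i <= Num.sqrt (\sum_i a i ^+ 2) * Num.sqrt (\sum_i b i ^+ 2).
Proof.
set A := \sum_i a i ^+ 2; set B := \sum_i b i ^+ 2; set C := \sum_i a i * b i.
have A0 : 0 <= A by apply: sumr_ge0 => i _; exact: sqr_ge0.
have B0 : 0 <= B by apply: sumr_ge0 => i _; exact: sqr_ge0.
have H : C ^+ 2 <= A * B.
  apply: disc => // t.
  have -> : A * t ^+ 2 + 2 * C * t + B = \sum_i (a i * t + b i) ^+ 2.
    rewrite /A /B /C mulr_suml mulrC mulr_sumr mulr_sumr -!big_split /=.
    by apply: eq_bigr => i _; ring.
  by apply: sumr_ge0 => i _; exact: sqr_ge0.
rewrite -sqrtrM //; have [C0|C0] := leP C 0.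
  by apply: le_trans C0 _; exact: sqrtr_ge0.
by rewrite -(ger0_norm (ltW C0)) -sqrtr_sqr; apply: ler_wsqrtr.
Qed.

Lemma CSn (I : finType) (F U V : I -> R) :
  (forall i, 0 <= U i) -> (forall i, 0 <= V i) ->
  (forall i, F i <= Num.sqrt (U i) * Num.sqrt (V i)) ->
  \sum_i F i <= Num.sqrt (\sum_i U i) * Num.sqrt (\sum_i V i).
Proof.
move=> U0 V0 FUV; apply: le_trans (ler_sum _ (fun i _ => FUV i)) _.
apply: le_trans (CS _ _) _.
by rewrite (eq_bigr _ (fun i _ => sqr_sqrtr (U0 i))) (eq_bigr (fun i => V i) (fun i _ => sqr_sqrtr (V0 i))).
Qed.

Lemma sq_le_sum (I : finType) (a : I -> R) i : a i ^+ 2 <= \sum_j a j ^+ 2.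
Proof. by rewrite (bigD1 i) //= lerDl; apply: sumr_ge0 => l _; exact: sqr_ge0. Qed.

Lemma sum_sq_ge0 (I : finType) (a : I -> R) : 0 <= \sum_j a j ^+ 2.
Proof. by apply: sumr_ge0 => l _; exact: sqr_ge0. Qed.

Lemma theta_bound (k : nat) (p : 'I_k -> nat) (a : 'I_k -> R)
  (phi d : forall i, 'I_(p i) -> R) :
  - (\sum_i a i * \sum_(l < p i) d i l * phi i l) <=
  Num.sqrt (\sum_i \sum_(l < p i) d i l ^+ 2) *
  (Num.sqrt (\sum_i a i ^+ 2) * Num.sqrt (\sum_i \sum_(l < p i) phi i l ^+ 2)).
Proof.
have -> : - (\sum_i a i * \sum_(l < p i) d i l * phi i l) =
  \sum_i \sum_(l < p i) (- (a i * phi i l)) * d i l.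
  rewrite -sumrN; apply: eq_bigr => i _; rewrite mulr_sumr -sumrN.
  by apply: eq_bigr => l _; ring.
apply: le_trans (_ : _ <= Num.sqrt (\sum_i \sum_(l < p i) (- (a i * phi i l)) ^+ 2) *
   Num.sqrt (\sum_i \sum_(l < p i) d i l ^+ 2)) _.
  apply: CSn => i; [exact: sum_sq_ge0 | exact: sum_sq_ge0 | exact: CS].
rewrite mulrC; apply: ler_wpM2l; first exact: sqrtr_ge0.
rewrite -sqrtrM; last exact: sum_sq_ge0.
rewrite ler_sqrt; last by apply: mulr_ge0; [exact: sum_sq_ge0 | apply: sumr_ge0 => i _; exact: sum_sq_ge0].
rewrite mulr_sumr; apply: ler_sum => i _; rewrite mulr_sumr; apply: ler_sum => l _.
rewrite sqrrN exprMn; apply: ler_wpM2r; first exact: sqr_ge0.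
exact: sq_le_sum.
Qed.

Lemma lam_bound (k : nat) (q : 'I_k -> 'I_k -> nat) (a : 'I_k -> R)
  (psi d : forall i j, 'I_(q i j) -> R) (u : R) :
  - (u * \sum_i \sum_j a i * (\sum_(l < q i j) d i j l * psi i j l) * a j) <=
  Num.sqrt (\sum_i \sum_j \sum_(l < q i j) d i j l ^+ 2) *
  (`|u| * (\sum_i a i ^+ 2) * Num.sqrt (\sum_i \sum_j \sum_(l < q i j) psi i j l ^+ 2)).
Proof.
have -> : - (u * \sum_i \sum_j a i * (\sum_(l < q i j) d i j l * psi i j l) * a j) =
  \sum_i \sum_j \sum_(l < q i j) (- (u * a i * a j * psi i j l)) * d i j l.
  rewrite mulr_sumr -sumrN; apply: eq_bigr => i _; rewrite mulr_sumr -sumrN.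
  apply: eq_bigr => j _; rewrite mulr_sumr mulr_suml mulr_sumr -sumrN.
  by apply: eq_bigr => l _; ring.
set P := \sum_i \sum_j \sum_(l < q i j) psi i j l ^+ 2.
set A := \sum_i a i ^+ 2.
apply: le_trans (_ : _ <= Num.sqrt (\sum_i \sum_j \sum_(l < q i j) (- (u * a i * a j * psi i j l)) ^+ 2) *
   Num.sqrt (\sum_i \sum_j \sum_(l < q i j) d i j l ^+ 2)) _.
  apply: CSn => i; [|by apply: sumr_ge0 => j _; exact: sum_sq_ge0|].
    by apply: sumr_ge0 => j _; exact: sum_sq_ge0.
  apply: CSn => j; [exact: sum_sq_ge0 | exact: sum_sq_ge0 | exact: CS].
rewrite mulrC; apply: ler_wpM2l; first exact: sqrtr_ge0.
have A0 : 0 <= A by exact: sum_sq_ge0.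
have -> : `|u| * A = Num.sqrt ((`|u| * A) ^+ 2) by rewrite sqrtr_sqr (ger0_norm (mulr_ge0 (normr_ge0 u) A0)).
rewrite -sqrtrM; last exact: sqr_ge0.
rewrite ler_sqrt; last by apply: mulr_ge0; [exact: sqr_ge0|apply: sumr_ge0 => i _; apply: sumr_ge0 => j _; exact: sum_sq_ge0].
rewrite /P mulr_sumr; apply: ler_sum => i _; rewrite mulr_sumr; apply: ler_sum => j _.
rewrite mulr_sumr; apply: ler_sum => l _.
rewrite sqrrN exprMn; apply: ler_wpM2r; first exact: sqr_ge0.
have h1 := sq_le_sum a i; have h2 := sq_le_sum a j; rewrite -/A in h1 h2.
have key : (a i * a j) ^+ 2 <= A ^+ 2.
  by rewrite exprMn expr2; apply: ler_pM => //; exact: sqr_ge0.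
rewrite -mulrA exprMn [X in _ <= X]exprMn real_normK ?num_real //.
by apply: ler_wpM2l => //; exact: sqr_ge0.
Qed.

End Alg.

Section Sig.
Variable R : realType.
Variable k : nat.
Implicit Types (S T : 'M[R]_k) (u v w : 'cV[R]_k).

Definition nsq v := (v^T *m v) 0 0.
Definition bf S u v := (u^T *m S *m v) 0 0.

Lemma nsqE v : nsq v = \sum_i v i 0 ^+ 2.
Proof. by rewrite /nsq mxE; apply: eq_bigr => i _; rewrite mxE expr2. Qed.

Lemma nsq_ge0 v : 0 <= nsq v.
Proof. by rewrite nsqE; apply: sumr_ge0 => i _; exact: sqr_ge0. Qed.

Lemma enorm_col v : enorm v = Num.sqrt (nsq v).
Proof. by rewrite /enorm nsqE; congr Num.sqrt; apply: eq_bigr => i _; rewrite big_ord1. Qed.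

Lemma enorm_sqr v : enorm v ^+ 2 = nsq v.
Proof. by rewrite enorm_col sqr_sqrtr // nsq_ge0. Qed.

Lemma enorm_ge0 v : 0 <= enorm v.
Proof. by rewrite enorm_col sqrtr_ge0. Qed.

Lemma bfE S u v : bf S u v = \sum_i \sum_j u i 0 * S i j * v j 0.
Proof.
rewrite /bf mxE exchange_big /=; apply: eq_bigr => j _; rewrite mxE mulr_suml.
by apply: eq_bigr => i _; rewrite mxE.
Qed.

Lemma bfZl S c u v : bf S (c *: u) v = c * bf S u v.
Proof. by rewrite /bf linearZ /= -!scalemxAl; set X := _ *m S *m _; rewrite !mxE. Qed.
Lemma bfZr S c u v : bf S u (c *: v) = c * bf S u v.
Proof. by rewrite /bf -scalemxAr; set X := _ *m S *m _; rewrite !mxE. Qed.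
Lemma bfDl S u w v : bf S (u + w) v = bf S u v + bf S w v.
Proof.
rewrite /bf linearD /= !mulmxDl; set X := _ *m S *m _; set Y := _ *m S *m _.
by rewrite !mxE.
Qed.
Lemma bfDr S u w v : bf S u (w + v) = bf S u w + bf S u v.
Proof.
rewrite /bf mulmxDr; set X := _ *m S *m _; set Y := _ *m S *m _.
by rewrite !mxE.
Qed.
Lemma bf_sym S u v : S^T = S -> bf S u v = bf S v u.
Proof.
move=> ST; rewrite /bf.
have -> : (v^T *m S *m u) 0 0 = ((v^T *m S *m u)^T) 0 0 by rewrite [RHS]mxE.
by rewrite !trmx_mul trmxK ST mulmxA.
Qed.
Lemma bf_nsq v : bf 1%:M v v = nsq v.
Proof. by rewrite /bf mulmx1. Qed.
Lemma bfBm S T u v : bf (S - T) u v = bf S u v - bf T u v.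
Proof.
rewrite /bf mulmxBr mulmxBl; set X := _ *m S *m _; set Y := _ *m T *m _.
by rewrite !mxE.
Qed.
Lemma bf_scal c u v : bf c%:M u v = c * bf 1%:M u v.
Proof. by rewrite /bf mul_mx_scalar -scalemxAl mulmx1; set X := _ *m _; rewrite !mxE. Qed.
Lemma bf_mul S u v : S^T = S -> bf S (S *m u) v = bf 1%:M (S *m u) (S *m v).
Proof. by move=> ST; rewrite /bf mulmx1 trmx_mul ST -!mulmxA. Qed.


Lemma bfDm S T u v : bf (S + T) u v = bf S u v + bf T u v.
Proof.
rewrite /bf mulmxDr mulmxDl; set X := _ *m S *m _; set Y := _ *m T *m _.
by rewrite !mxE.
Qed.
Lemma bfZm c S u v : bf (c *: S) u v = c * bf S u v.
Proof. by rewrite /bf -scalemxAr -scalemxAl; set X := _ *m S *m _; rewrite !mxE. Qed.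
Lemma bf_tr S v : bf S^T v v = bf S v v.
Proof.
rewrite /bf; have -> : (v^T *m S^T *m v) 0 0 = ((v^T *m S^T *m v)^T) 0 0 by rewrite [RHS]mxE.
by rewrite !trmx_mul !trmxK mulmxA.
Qed.
Lemma sym_bf S v : bf (sym_part S) v v = bf S v v.
Proof.
rewrite /sym_part bfZm bfDm bf_tr.
have h2 : (2%:R : R) != 0 by rewrite pnatr_eq0.
by field.
Qed.
Lemma sym_tr S : (sym_part S)^T = sym_part S.
Proof. by rewrite /sym_part linearZ /= linearD /= trmxK addrC. Qed.

Lemma nsq_bf v : nsq v = bf 1%:M v v.
Proof. by rewrite bf_nsq. Qed.

Lemma nsqZ c v : nsq (c *: v) = c ^+ 2 * nsq v.
Proof. by rewrite !nsq_bf bfZl bfZr mulrA expr2. Qed.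

Lemma enormZ c v : enorm (c *: v) = `|c| * enorm v.
Proof.
by rewrite !enorm_col nsqZ sqrtrM ?sqr_ge0 // sqrtr_sqr.
Qed.

Lemma nsq_eq0 v : (nsq v == 0) = (v == 0).
Proof.
apply/idP/idP => [|/eqP->]; last first.
  by rewrite nsqE big1 // => i _; rewrite mxE expr0n.
rewrite nsqE psumr_eq0 => [/allP H|i _]; last exact: sqr_ge0.
apply/eqP/matrixP => i j; rewrite (ord1 j) mxE.
by have := H i (mem_index_enum _); rewrite sqrf_eq0 => /eqP.
Qed.

Lemma bf0 S v : v = 0 -> bf S v v = 0.
Proof. by move=> ->; rewrite -(scale0r (0 : 'cV[R]_k)) bfZl mul0r. Qed.

Lemma posdef_ge0 S v : posdef S -> 0 <= bf S v v.
Proof.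
move=> P; have [v0|v0] := eqVneq v 0; first by rewrite bf0.
exact/ltW/P.
Qed.

Lemma bfS_bound S z : bf S z z <= (\sum_i \sum_j `|S i j|) * nsq z.
Proof.
rewrite bfE nsqE mulr_suml; apply: ler_sum => i _; rewrite mulr_suml.
apply: ler_sum => j _.
have Hi : z i 0 ^+ 2 <= \sum_l z l 0 ^+ 2.
  by rewrite (bigD1 i) //= lerDl; apply: sumr_ge0 => l _; exact: sqr_ge0.
have Hj : z j 0 ^+ 2 <= \sum_l z l 0 ^+ 2.
  by rewrite (bigD1 j) //= lerDl; apply: sumr_ge0 => l _; exact: sqr_ge0.
set s := \sum_l _ in Hi Hj *.
have e : z i 0 * S i j * z j 0 <= `|S i j| * `|z i 0 * z j 0|.
  rewrite [z i 0 * _]mulrC -mulrA -normrM; apply: le_trans (ler_norm _) _.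
  by rewrite normrM.
apply: le_trans e _; apply: ler_wpM2l => //.
have : 2 * `|z i 0 * z j 0| <= z i 0 ^+ 2 + z j 0 ^+ 2.
  have ha : `|z i 0| ^+ 2 = z i 0 ^+ 2 := real_normK (num_real _).
  have hb : `|z j 0| ^+ 2 = z j 0 ^+ 2 := real_normK (num_real _).
  rewrite normrM -ha -hb.
  have := sqr_ge0 (`|z i 0| - `|z j 0|); nra.
lra.
Qed.

Lemma psd_cs T u v : T^T = T -> (forall w, 0 <= bf T w w) ->
  bf T u v ^+ 2 <= bf T u u * bf T v v.
Proof.
move=> ST P; apply: disc; first exact: P.
move=> t; have := P (t *: u + v).
rewrite bfDl !bfDr !bfZl !bfZr (bf_sym v u ST).
by have -> : bf T u u * t ^+ 2 + 2 * bf T u v * t + bf T v v =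
  t * (t * bf T u u) + t * bf T u v + (t * bf T u v + bf T v v) by ring.
Qed.

Lemma sigma_bound S b : (0 < k)%N -> S^T = S -> posdef S -> b <= sigma_min S ->
  forall v, b * nsq v <= bf S v v.
Proof.
move=> k0 ST P bs.
pose sph := [set v : 'cV[R]_k | enorm v = 1].
pose Q := [set bf S v v | v in sph].
pose lam := inf Q.
have unit_nz v : sph v -> v != 0.
  move=> sv; apply/eqP => v0; move: sv; rewrite /sph /= v0 enorm_col.
  have -> : nsq (0 : 'cV[R]_k) = 0 by apply/eqP; rewrite nsq_eq0.
  by rewrite sqrtr0 => /eqP; rewrite eq_sym oner_eq0.
have sph_ne : exists v, sph v.
  pose c : 'cV[R]_k := const_mx 1.
  have c0 : c != 0.
    apply/eqP => /matrixP /(_ (Ordinal k0) 0); rewrite !mxE => /eqP.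
    by rewrite oner_eq0.
  have ep : 0 < enorm c.
    rewrite enorm_col sqrtr_gt0 lt_def nsq_ge0 andbT nsq_eq0; exact: c0.
  exists ((enorm c)^-1 *: c); rewrite /sph /= enormZ ger0_norm; last by rewrite invr_ge0 ltW.
  by rewrite mulVf // gt_eqF.
have Qlb : lbound Q 0 by move=> _ [v _ <-]; exact: posdef_ge0.
have Qne : Q !=set0.
  by case: sph_ne => v sv; exists (bf S v v); exists v.
have lam0 : 0 <= lam by apply: lb_le_inf.
have lamQ : forall v, sph v -> lam <= bf S v v.
  move=> v sv; apply: (ge_inf); first by exists 0.
  by exists v.
have lamv : forall v, lam * nsq v <= bf S v v.
  move=> v; have [v0|v0] := eqVneq v 0.
    by rewrite bf0 // v0 (_ : nsq 0 = 0) ?mulr0 //; apply/eqP; rewrite nsq_eq0.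
  have ep : 0 < enorm v.
    by rewrite enorm_col sqrtr_gt0 lt_def nsq_ge0 andbT nsq_eq0.
  have := lamQ ((enorm v)^-1 *: v).
  have e1 : sph ((enorm v)^-1 *: v).
    rewrite /sph /= enormZ ger0_norm; last by rewrite invr_ge0 ltW.
    by rewrite mulVf // gt_eqF.
  move=> /(_ e1).
  rewrite bfZl bfZr mulrA -expr2 exprVn -enorm_sqr.
  by rewrite ler_pdivlMl ?exprn_gt0 // mulrC.
pose T := S - lam%:M.
have TT : T^T = T by rewrite /T linearB /= ST tr_scalar_mx.
have Tpsd : forall w, 0 <= bf T w w.
  by move=> w; rewrite /T bfBm bf_scal bf_nsq subr_ge0.
pose C := \sum_i \sum_j `|T i j|.
have C0 : 0 <= C by apply: sumr_ge0 => i _; apply: sumr_ge0 => j _.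
have TvB : forall v, nsq (T *m v) <= C * bf T v v.
  move=> v; have cs := psd_cs (T *m v) v TT Tpsd.
  rewrite bf_mul // -nsq_bf in cs.
  have := bfS_bound T (T *m v); rewrite -/C => hb.
  have n0 := nsq_ge0 (T *m v).
  have [z0|zp] := eqVneq (nsq (T *m v)) 0.
    by rewrite z0; apply: mulr_ge0 => //.
  have zp' : 0 < nsq (T *m v) by rewrite lt_def zp n0.
  rewrite -(@ler_pM2l _ (nsq (T *m v))) //.
  apply: le_trans (_ : bf T (T *m v) (T *m v) * bf T v v <= _).
    by rewrite -expr2; exact: cs.
  rewrite mulrA; apply: ler_wpM2r; first exact: Tpsd.
  by rewrite mulrC.
have SvE : forall v, nsq (S *m v) = nsq (T *m v) + 2 * lam * bf T v v + lam ^+ 2 * nsq v.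
  move=> v; have -> : S *m v = T *m v + lam *: v.
    by rewrite /T mulmxBl mul_scalar_mx subrK.
  rewrite !nsq_bf bfDl !bfDr !bfZl !bfZr -!nsq_bf.
  have -> : bf 1%:M (T *m v) v = bf T v v.
    by rewrite /bf mulmx1 trmx_mul TT.
  have -> : bf 1%:M v (T *m v) = bf T v v by rewrite /bf mulmx1 mulmxA.
  ring.
have sig0 : 0 <= sigma_min S.
  apply: lb_le_inf.
    by case: sph_ne => v sv; exists (enorm (S *m v)); exists v.
  by move=> _ [v _ <-]; exact: enorm_ge0.
have sigle : forall v, sph v -> sigma_min S <= enorm (S *m v).
  move=> v sv; apply: ge_inf; last by exists v.
  by exists 0 => _ [w _ <-]; exact: enorm_ge0.
have key : forall e, 0 < e -> sigma_min S ^+ 2 <= lam ^+ 2 + (C + 2 * lam) * e.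
  move=> e e0; have [_ [v sv <-] ve] := inf_adherent e0 (conj Qne (ex_intro _ 0 Qlb)).
  have nv : nsq v = 1 by rewrite -enorm_sqr sv expr1n.
  have := sigle v sv; rewrite enorm_col => sl.
  have : sigma_min S ^+ 2 <= nsq (S *m v).
    rewrite -(sqr_sqrtr (nsq_ge0 (S *m v))).
    have := sqrtr_ge0 (nsq (S *m v)); nra.
  rewrite SvE nv mulr1 => h1.
  have h2 := TvB v.
  have h3 : bf T v v < e.
    rewrite /T bfBm bf_scal bf_nsq nv mulr1; have : bf S v v < lam + e := ve; lra.
  have h4 := Tpsd v.
  nra.
have sle : sigma_min S <= lam.
  have : sigma_min S ^+ 2 <= lam ^+ 2.
    apply/ler_addgt0Pr => e e0.
    have K0 : 0 < C + 2 * lam + 1 by lra.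
    have := key (e / (C + 2 * lam + 1)) (divr_gt0 e0 K0).
    move=> H; apply: le_trans H _; rewrite lerD2l.
    rewrite mulrA ler_pdivrMr //; nra.
  nra.
move=> v; apply: le_trans (lamv v); apply: ler_wpM2r; first exact: nsq_ge0.
exact: le_trans sle.
Qed.

End Sig.

Section Point.
Variable R : realType.

Lemma enorm_row (k : nat) (r : 'rV[R]_k) : enorm r = Num.sqrt (\sum_j r 0 j ^+ 2).
Proof. by rewrite /enorm big_ord1. Qed.

Lemma nsq_tr (k : nat) (r : 'rV[R]_k) : nsq r^T = \sum_j r 0 j ^+ 2.
Proof. by rewrite nsqE; apply: eq_bigr => j _; rewrite mxE. Qed.

Lemma enorm_tr (k : nat) (r : 'rV[R]_k) : enorm r = enorm r^T.
Proof. by rewrite enorm_col nsq_tr enorm_row. Qed.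

Lemma frac_lb (a e : R) : 0 <= a -> 0 < e -> a - e <= a ^+ 2 / (a + e).
Proof.
move=> a0 e0; rewrite ler_pdivlMr; last by lra.
nra.
Qed.

Lemma pointwise (m n : nat) (p : 'I_n -> nat) (q : 'I_n -> 'I_n -> nat)
  (f fu fu_lo fu_hi : 'cV[R]_(m + n) -> 'cV[R]_(m + n))
  (phi : forall i : 'I_n, 'cV[R]_(m + n) -> 'I_(p i) -> R)
  (th th0 : forall i : 'I_n, 'I_(p i) -> R)
  (g : 'cV[R]_(m + n) -> 'M[R]_n)
  (psi : forall i j : 'I_n, 'cV[R]_(m + n) -> 'I_(q i j) -> R)
  (lam lam0 : forall i j : 'I_n, 'I_(q i j) -> R)
  (h : 'cV[R]_(m + n) -> R) (bstar eps1 eps2 u0v mh nh : R) (y : 'cV[R]_(m + n))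
  (dx : 'cV[R]_(m + n)) :
  (0 < n)%N ->
  (forall j, fu_lo y j 0 <= fu y j 0 <= fu_hi y j 0) ->
  0 < bstar ->
  posdef (sym_part (g y + g_lambda psi lam y)) ->
  bstar <= sigma_min (sym_part (g y + g_lambda psi lam y)) ->
  0 <= mh -> 0 <= nh -> 0 < eps1 -> 0 < eps2 ->
  dx = f y + fu y + col_mx 0 (f_theta phi th y
        + (g y + g_lambda psi lam y) *m
          (s_g bstar eps1 eps2 mh nh (norm_Omega_phi phi y) (norm_Omega_psi psi y)
             (enorm (grad2 h y)) u0v *: (grad2 h y)^T)) ->
  Mfun h f fu_lo fu_hi y + (grad2 h y *m f_theta phi th0 y) 0 0
    + (grad2 h y *m (g y + g_lambda psi lam0 y) *m (grad2 h y)^T) 0 0 * u0v - (eps1 + eps2)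
    - (Num.sqrt (\sum_i \sum_(l < p i) (th i l - th0 i l) ^+ 2) - mh)
       * (enorm (grad2 h y) * norm_Omega_phi phi y)
    - (Num.sqrt (\sum_i \sum_j \sum_(l < q i j) (lam i j l - lam0 i j l) ^+ 2) - nh)
       * (enorm (grad2 h y) ^+ 2 * `|u0v| * norm_Omega_psi psi y)
  <= (grad h y *m dx) 0 0.
Proof.
move=> n0 fuB b0 PD SB mh0 nh0 e1 e2 ->.
set hx := grad2 h y.
set s := s_g _ _ _ _ _ _ _ _ _.
set mus := Num.sqrt (\sum_i \sum_(l < p i) _).
set nus := Num.sqrt (\sum_i \sum_j \sum_(l < q i j) _).
set a := grad h y; set v := hx^T.
set G := g y + g_lambda psi lam y; set G0 := g y + g_lambda psi lam0 y.
set Ophi := norm_Omega_phi phi y; set Opsi := norm_Omega_psi psi y.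
have E1 : a *m (f y + fu y + col_mx 0 (f_theta phi th y + G *m (s *: v))) =
   a *m f y + a *m fu y + (hx *m f_theta phi th y + s *: (hx *m G *m v)).
  rewrite mulmxDr [a *m (f y + fu y)]mulmxDr; congr (_ + _).
  rewrite -{1}(hsubmxK a) mul_row_col mulmx0 add0r mulmxDr scalemxAr mulmxA.
  by [].
rewrite E1.
set X1 := a *m f y; set X2 := a *m fu y; set X3 := hx *m f_theta phi th y.
set Y := hx *m G *m v.
have addE : forall A B : 'M[R]_1, (A + B) 0 0 = A 0 0 + B 0 0 by move=> A B; rewrite mxE.
have sclE : forall (c : R) (A : 'M[R]_1), (c *: A) 0 0 = c * A 0 0 by move=> c A; rewrite mxE.
rewrite !addE sclE.
have F1 : \sum_j Num.min (a 0 j * fu_lo y j 0) (a 0 j * fu_hi y j 0) <= X2 0 0.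
  rewrite /X2 mxE; apply: ler_sum => j _; rewrite ge_min.
  have /andP [l1 l2] := fuB j.
  have [ap|an] := leP 0 (a 0 j).
    by rewrite ler_wpM2l.
  by rewrite orbC ler_wnM2l // ltW.
have F2 : (hx *m f_theta phi th0 y) 0 0 - mus * (enorm hx * Ophi) <= X3 0 0.
  have := theta_bound (fun i => hx 0 i) (phi^~ y) (fun i l => th i l - th0 i l).
  rewrite -enorm_row -/mus -/Ophi => H.
  suff -> : X3 0 0 = (hx *m f_theta phi th0 y) 0 0 +
     \sum_i hx 0 i * \sum_(l < p i) (th i l - th0 i l) * phi i y l  by rewrite /Ophi /norm_Omega_phi; lra.
  rewrite /X3 !mxE -big_split /=; apply: eq_bigr => i _; rewrite !mxE -mulrDr.
  congr (_ * _); rewrite -big_split /=; apply: eq_bigr => l _; ring.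
have vT : v^T = hx by rewrite trmxK.
have YQ : Y 0 0 = bf G v v by rewrite /Y /bf vT.
have Y0 : (hx *m G0 *m v) 0 0 = bf G0 v v by rewrite /bf vT.
have Delta : bf G v v = bf G0 v v +
   \sum_i \sum_j v i 0 * (\sum_(l < q i j) (lam i j l - lam0 i j l) * psi i j y l) * v j 0.
  have -> : G = G0 + (G - G0) by rewrite addrC subrK.
  rewrite bfDm; congr (_ + _); rewrite bfE.
  apply: eq_bigr => i _; apply: eq_bigr => j _; congr (_ * _ * _).
  rewrite /G /G0 !mxE opprD addrACA subrr add0r -sumrB; apply: eq_bigr => l _; ring.
have F3 := lam_bound (fun i => v i 0) (fun i j => psi i j y) (fun i j l => lam i j l - lam0 i j l) u0v.
rewrite -/nus -/Opsi -nsqE -enorm_sqr -/v -enorm_tr in F3.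
have F4 : bstar * enorm hx ^+ 2 <= bf G v v.
  rewrite enorm_tr enorm_sqr -sym_bf; apply: sigma_bound => //.
  exact: sym_tr.
set r := s - u0v.
have hs : s = u0v + r by rewrite /r addrC subrK.
have nh0' := enorm_ge0 v; rewrite -enorm_tr in nh0'.
have O1 : 0 <= Ophi by apply: sqrtr_ge0.
have O2 : 0 <= Opsi by apply: sqrtr_ge0.
set nx := enorm hx in nh0' F2 F3 F4 *.
set k1 := mh ^+ 2 * Ophi ^+ 2 / (mh * Ophi * nx + eps1).
set k2 := nh * Opsi * nx.
have d1 : 0 < mh * Ophi * nx + eps1.
  by apply: ltr_wpDl => //; apply: mulr_ge0 => //; apply: mulr_ge0.
have k20 : 0 <= k2 by apply: mulr_ge0 => //; apply: mulr_ge0.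
have d2 : 0 < k2 * nx * `|u0v| + eps2.
  by apply: ltr_wpDl => //; apply: mulr_ge0 => //; apply: mulr_ge0.
have rE : r = k1 / bstar + k2 ^+ 2 * u0v ^+ 2 / (bstar * (k2 * nx * `|u0v| + eps2)).
  rewrite /r /s /s_g /= -/Ophi -/Opsi -/nx -/k1 -/k2; ring.
have k10 : 0 <= k1 by apply: divr_ge0 => //; [apply: mulr_ge0; exact: sqr_ge0 | exact: ltW].
have r0 : 0 <= r.
  rewrite rE; apply: addr_ge0; first by apply: divr_ge0 => //; exact: ltW.
  apply: divr_ge0; first by apply: mulr_ge0; exact: sqr_ge0.
  by apply: mulr_ge0; apply: ltW.
have F5 : mh * Ophi * nx - eps1 + (nh * Opsi * nx ^+ 2 * `|u0v| - eps2)
          <= r * (bstar * nx ^+ 2).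
  have -> : r * (bstar * nx ^+ 2) = (mh * Ophi * nx) ^+ 2 / (mh * Ophi * nx + eps1)
     + (k2 * nx * `|u0v|) ^+ 2 / (k2 * nx * `|u0v| + eps2).
    rewrite rE /k1; have bn : bstar != 0 by rewrite gt_eqF.
    have -> : u0v ^+ 2 = `|u0v| ^+ 2 by rewrite real_normK ?num_real.
    by field; rewrite bn (gt_eqF d1) (gt_eqF d2).
  apply: lerD; first by apply: frac_lb => //; apply: mulr_ge0 => //; apply: mulr_ge0.
  have -> : nh * Opsi * nx ^+ 2 * `|u0v| = k2 * nx * `|u0v| by rewrite /k2 expr2 !mulrA.
  by apply: frac_lb => //; apply: mulr_ge0 => //; apply: mulr_ge0.
have F6 : r * (bstar * nx ^+ 2) <= r * bf G v v by apply: ler_wpM2l.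
rewrite YQ Delta hs Y0.
have MfE : Mfun h f fu_lo fu_hi y = X1 0 0 +
  \sum_j Num.min (a 0 j * fu_lo y j 0) (a 0 j * fu_hi y j 0) by [].
rewrite MfE.
rewrite Delta in F6.
set Dl := \sum_i \sum_j v i 0 * _ * _ in F3 F6 *.
have F3' : -(u0v * Dl) <= nus * (`|u0v| * nx ^+ 2 * Opsi) := F3.
set Bm := bf G0 v v in F6 *.
set Sm := \sum_j Num.min _ _ in F1 *.
lra.
Qed.

End Point.

Section D.
Variable R : realType.

Lemma der_lin (gam t : R) : is_derive t 1 (fun s : R => gam * s) gam.
Proof.
have := @is_deriveZ R R^o R^o id gam t 1 1 (is_derive_id _ _).
by rewrite /GRing.scale /= mulr1.
Qed.

Lemma der_exp (gam t : R) : is_derive t 1 (fun s : R => expR (gam * s)) (expR (gam * t) * gam).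
Proof.
exact: (is_derive1_comp (is_derive_expR (gam * t)) (der_lin gam t)).
Qed.
End D.
Section D2.
Variable R : realType.
Lemma der_hx (N : nat) (h : 'cV[R]_N -> R) (x : R -> 'cV[R]_N) t :
  differentiable h (x t) -> derivable x t 1 ->
  is_derive t 1 (fun s => h (x s)) ((grad h (x t) *m 'D_1 x t) 0 0).
Proof.
move=> dh dx; have dx' : differentiable x t by apply/derivable1_diffP.
have dc : differentiable (h \o x) t by apply: differentiable_comp.
apply: DeriveDef; first exact: diff_derivable.
rewrite (deriveE (f := h \o x)) // diff_comp // /=.
have ex : 'd x t 1 = 'D_1 x t by rewrite deriveE.
rewrite ex; set w := 'D_1 x t.
rewrite [in LHS](matrix_sum_delta w) linear_sum /= mxE.
apply: eq_bigr => j _; rewrite big_ord1 linearZ /= -deriveE // mxE.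
by rewrite mulrC.
Qed.
End D2.
Section D3.
Variable R : realType.
Implicit Types (F G : R -> R) (t dF dG : R).
Lemma der_mul F G t dF dG : is_derive t 1 F dF -> is_derive t 1 G dG ->
  is_derive t 1 (fun s => F s * G s) (F t * dG + G t * dF).
Proof. by move=> H1 H2; exact: (is_deriveM H1 H2). Qed.
Lemma der_sub F G t dF dG : is_derive t 1 F dF -> is_derive t 1 G dG ->
  is_derive t 1 (fun s => F s - G s) (dF - dG).
Proof. by move=> H1 H2; exact: (is_deriveB H1 H2). Qed.
Lemma der_cst (c t : R) : is_derive t 1 (fun _ : R => c) 0.
Proof. exact: is_derive_cst. Qed.
Lemma der_sqk F t dF (c k : R) : is_derive t 1 F dF ->
  is_derive t 1 (fun s => (c - F s) ^+ 2 / k) (- (2 * (c - F t) * dF) / k).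
Proof.
move=> H.
have H1 := der_sub (der_cst c t) H.
have H2 := der_mul (der_mul H1 H1) (der_cst k^-1 t).
apply: is_derive_eq H2 _.
rewrite /=; ring.
Qed.
End D3.
Section C.
Variable R : realType.
Implicit Types (F G : R -> R).

Lemma pos_near F (t0 : R) : {within `[0, +oo[, continuous F} -> 0 <= t0 -> 0 < F t0 ->
  exists2 d : R, 0 < d & forall s, 0 <= s -> `|t0 - s| < d -> 0 < F s.
Proof.
move=> FC t00 Fp.
have := (subspace_continuousP _ _).1 FC t0.
have At0 : [set` `[0, +oo[%R] t0 by rewrite /= in_itv /= andbT.
move=> /(_ At0) /cvgr_gt /(_ _ Fp).
rewrite near_withinE => /nbhs_ballP [d d0 Hd].
exists d => // s s0 ds; apply: Hd; first by [].
by rewrite /= in_itv /= andbT.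
Qed.

Lemma cont_sq (A : set R) F (c k : R) : {within A, continuous F} ->
  {within A, continuous (fun s => (c - F s) ^+ 2 / k)}.
Proof.
move=> FC s.
have -> : (fun s => (c - F s) ^+ 2 / k) =
  ((fun s => c - F s) \* (fun s => c - F s)) \* (fun _ => k^-1).
  by apply/funext => z /=; rewrite expr2.
have C1 : {for s, continuous ((fun s => c - F s) : subspace A -> R)}.
  by apply: continuousB; [exact: cst_continuous | exact: FC].
apply: continuousM; first exact: continuousM.
exact: cst_continuous.
Qed.

Lemma cont_comp_h (N : nat) (h : 'cV[R]_N -> R) (x : R -> 'cV[R]_N) (A : set R) :
  (forall y, differentiable h y) -> {within A, continuous x} ->
  {within A, continuous (fun s => h (x s))}.
Proof.
move=> hd xc s; apply: (continuous_comp (xc s)).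
exact: differentiable_continuous.
Qed.

Lemma cont_exp (A : set R) (gam : R) : {within A, continuous (fun s => expR (gam * s))}.
Proof.
apply: continuous_subspaceT => s.
apply: (continuous_comp (f := fun s => gam * s)); last exact: continuous_expR.
exact: mulrl_continuous.
Qed.
End C.
Section G.
Variable R : realType.
Lemma grow (F : R -> R) (gam b : R) : 0 <= b -> {within `[0, b], continuous F} ->
  (forall s, 0 < s < b -> exists2 dF, is_derive s 1 F dF & 0 <= gam * F s + dF) ->
  F 0 <= expR (gam * b) * F b.
Proof.
move=> b0 FC H.
have [bz|bp] := eqVneq b 0; first by rewrite bz mulr0 expR0 mul1r.
have bp' : 0 < b by rewrite lt_def bp b0.
pose E := fun s => expR (gam * s) * F s.
have DE : forall s, 0 < s < b -> exists2 d, is_derive s 1 E d & 0 <= d.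
  move=> s sb; have [dF HF HF0] := H s sb.
  exists (expR (gam * s) * dF + F s * (expR (gam * s) * gam)).
    exact: (der_mul (der_exp gam s) HF).
  have -> : expR (gam * s) * dF + F s * (expR (gam * s) * gam) =
     expR (gam * s) * (gam * F s + dF) by ring.
  by apply: mulr_ge0 => //; exact: ltW (expR_gt0 _).
have EC : {within `[0, b], continuous E}.
  have -> : E = (fun s => expR (gam * s)) \* F by [].
  by move=> s; apply: continuousM; [exact: cont_exp | exact: FC].
have d1 : forall s, s \in `]0, b[%R -> derivable E s 1.
  move=> s; rewrite in_itv /= => /DE [d Hd _]; by case: Hd.
have d2 : forall s, s \in `]0, b[%R -> 0 <= E^`() s.
  move=> s; rewrite in_itv /= => /DE [d Hd d0].
  by rewrite derive1E derive_val.
have HH := @ger0_derive1_le_cc R E 0 b d1 d2 EC 0 b.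
have i0 : (0:R) \in `[0, b]%R by rewrite in_itv /= lexx b0.
have ib : b \in `[0, b]%R by rewrite in_itv /= lexx b0.
have := HH i0 ib b0.
by rewrite /E mulr0 expR0 mul1r.
Qed.
End G.


Section Fin.
Variable R : realType.

Lemma sq_box (lo hi a b : R) : lo <= a <= hi -> lo <= b <= hi ->
  (a - b) ^+ 2 <= Num.max ((hi - b) ^+ 2) ((lo - b) ^+ 2).
Proof.
move=> /andP [a1 a2] /andP [b1 b2]; rewrite le_max.
have [ab|ab] := leP b a.
  by apply/orP; left; nra.
by apply/orP; right; nra.
Qed.

Lemma final_ineq (gam gth gla hv mus nus mh nh mub nub A Bv D Mf F0 P1w e12 dmu dnu : R) :
  0 < gam -> 0 < gth -> 0 < gla -> 0 <= mus -> mus <= mub -> 0 <= nus -> nus <= nub ->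
  dmu = - gam * mh + gth * A -> dnu = - gam * nh + gla * Bv ->
  0 <= Mf + F0 - e12 + gam * (hv - mub ^+ 2 / (2 * gth) - nub ^+ 2 / (2 * gla)) + P1w ->
  Mf + F0 + P1w - e12 - (mus - mh) * A - (nus - nh) * Bv <= D ->
  0 <= gam * (hv - (mus - mh) ^+ 2 / (2 * gth) - (nus - nh) ^+ 2 / (2 * gla))
       + (D - (- (2 * (mus - mh) * dmu) / (2 * gth)) - (- (2 * (nus - nh) * dnu) / (2 * gla))).
Proof.
move=> g0 t0 l0 m0 mb n0 nb -> -> Q HD.
have gt : gth != 0 by rewrite gt_eqF.
have gl : gla != 0 by rewrite gt_eqF.
have -> : gam * (hv - (mus - mh) ^+ 2 / (2 * gth) - (nus - nh) ^+ 2 / (2 * gla))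
       + (D - (- (2 * (mus - mh) * (- gam * mh + gth * A)) / (2 * gth))
            - (- (2 * (nus - nh) * (- gam * nh + gla * Bv)) / (2 * gla))) =
   (D - (Mf + F0 + P1w - e12 - (mus - mh) * A - (nus - nh) * Bv))
   + (Mf + F0 - e12 + gam * (hv - mub ^+ 2 / (2 * gth) - nub ^+ 2 / (2 * gla)) + P1w)
   + gam / (2 * gth) * (mub ^+ 2 - mus ^+ 2 + mh ^+ 2)
   + gam / (2 * gla) * (nub ^+ 2 - nus ^+ 2 + nh ^+ 2).
  by field; rewrite gl gt.
have a1 : 0 <= gam / (2 * gth) * (mub ^+ 2 - mus ^+ 2 + mh ^+ 2).
  apply: mulr_ge0; first by apply: divr_ge0; lra.
  have := sqr_ge0 mh; nra.
have a2 : 0 <= gam / (2 * gla) * (nub ^+ 2 - nus ^+ 2 + nh ^+ 2).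
  apply: mulr_ge0; first by apply: divr_ge0; lra.
  have := sqr_ge0 nh; nra.
lra.
Qed.
End Fin.

Theorem theorem2 (R : realType) (m n : nat)
  (p : 'I_n -> nat) (q : 'I_n -> 'I_n -> nat)
  (f fu fu_lo fu_hi : 'cV[R]_(m + n) -> 'cV[R]_(m + n))
  (phi : forall i : 'I_n, 'cV[R]_(m + n) -> 'I_(p i) -> R)
  (th th_lo th_hi th0 : forall i : 'I_n, 'I_(p i) -> R)
  (g : 'cV[R]_(m + n) -> 'M[R]_n)
  (psi : forall i j : 'I_n, 'cV[R]_(m + n) -> 'I_(q i j) -> R)
  (lam lam_lo lam_hi lam0 : forall i j : 'I_n, 'I_(q i j) -> R)
  (h : 'cV[R]_(m + n) -> R)
  (X : set 'cV[R]_(m + n)) (bstar : R)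
  (gam eps1 eps2 gth gla : R)
  (u0 : 'cV[R]_(m + n) -> R)
  (x : R -> 'cV[R]_(m + n)) (muh nuh : R -> R) :
  (0 < n)%N ->
  (* standing assumptions on the system *)
  lipschitz_eucl f -> lipschitz_eucl fu ->
  (forall y, differentiable h y) ->
  (forall j, continuous (fun y => grad h y 0 j)) ->
  (* Assumption A *)
  (forall y j, fu_lo y j 0 <= fu y j 0 <= fu_hi y j 0) ->
  (* Assumption B' *)
  (forall i k, th_lo i k <= th i k <= th_hi i k) ->
  (forall i j k, lam_lo i j k <= lam i j k <= lam_hi i j k) ->
  (* nominal values *)
  (forall i k, th_lo i k <= th0 i k <= th_hi i k) ->
  (forall i j k, lam_lo i j k <= lam0 i j k <= lam_hi i j k) ->
  (* Assumption C' *)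
  compact X -> safe_set h `<=` X -> 0 < bstar ->
  (forall y, X y ->
     posdef (sym_part (g y + g_lambda psi lam y)) /\
     bstar <= sigma_min (sym_part (g y + g_lambda psi lam y))) ->
  (* (ii) *)
  0 < gam -> 0 < eps1 -> 0 < eps2 -> 0 < gth -> 0 < gla ->
  let Psi0 := fun y =>
    Mfun h f fu_lo fu_hi y + (grad2 h y *m f_theta phi th0 y) 0 0
    - (eps1 + eps2)
    + gam * (h y - mu_bar th_lo th_hi th0 ^+ 2 / (2%:R * gth)
                 - nu_bar lam_lo lam_hi lam0 ^+ 2 / (2%:R * gla)) in
  let Psi1 := fun y =>
    (grad2 h y *m (g y + g_lambda psi lam0 y) *m (grad2 h y)^T) 0 0 in
  (forall y, safe_set h y -> exists v : R, 0 <= Psi0 y + Psi1 y * v) ->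
  (* (iii) *)
  lipschitz_eucl_scalar u0 ->
  (forall y, safe_set h y -> 0 <= Psi0 y + Psi1 y * u0 y) ->
  {within `[0, +oo[, continuous muh} ->
  {within `[0, +oo[, continuous nuh} ->
  (forall t, 0 < t -> derivable muh t 1 /\
     'D_1 muh t = - gam * muh t
        + gth * enorm (grad2 h (x t)) * norm_Omega_phi phi (x t)) ->
  (forall t, 0 < t -> derivable nuh t 1 /\
     'D_1 nuh t = - gam * nuh t
        + gla * enorm (grad2 h (x t)) ^+ 2 * `|u0 (x t)|
              * norm_Omega_psi psi (x t)) ->
  0 < muh 0 -> 0 < nuh 0 ->
  (* (iv) *)
  (muh 0 ^+ 2 + mu_bar th_lo th_hi th0 ^+ 2) / (2%:R * gth)
    + (nuh 0 ^+ 2 + nu_bar lam_lo lam_hi lam0 ^+ 2) / (2%:R * gla) <= h (x 0) ->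
  (* closed loop with u = s_g(u0) h_{x2}^T *)
  let u := fun t =>
    s_g bstar eps1 eps2 (muh t) (nuh t) (norm_Omega_phi phi (x t))
        (norm_Omega_psi psi (x t)) (enorm (grad2 h (x t))) (u0 (x t))
      *: (grad2 h (x t))^T in
  {within `[0, +oo[, continuous x} ->
  (forall t, 0 < t -> derivable x t 1 /\
     'D_1 x t = f (x t) + fu (x t)
       + col_mx 0 (f_theta phi th (x t)
                   + (g (x t) + g_lambda psi lam (x t)) *m u t)) ->
  forall t, 0 < t -> 0 <= h (x t).
Proof.
move=> n0 lipf lipfu hdiff gradc fuB thB lamB th0B lam0B cX sX b0 CX gam0 e10 e20
  gth0 gla0 Psi0 Psi1 Kne lipu0 u0K muc nuc mud nud mu0 nu0 init u xc xd.
set mus := Num.sqrt (\sum_i \sum_(l < p i) (th i l - th0 i l) ^+ 2).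
set nus := Num.sqrt (\sum_i \sum_j \sum_(l < q i j) (lam i j l - lam0 i j l) ^+ 2).
set mub := mu_bar th_lo th_hi th0.
set nub := nu_bar lam_lo lam_hi lam0.
rewrite -/mub -/nub in init.
have mus0 : 0 <= mus by apply: sqrtr_ge0.
have nus0 : 0 <= nus by apply: sqrtr_ge0.
have musb : mus <= mub.
  rewrite /mus /mub /mu_bar ler_sqrt; last first.
    by apply: sumr_ge0 => i _; apply: sumr_ge0 => l _; rewrite le_max sqr_ge0.
  apply: ler_sum => i _; apply: ler_sum => l _; apply: sq_box; [exact: thB | exact: th0B].
have nusb : nus <= nub.
  rewrite /nus /nub /nu_bar ler_sqrt; last first.
    by apply: sumr_ge0 => i _; apply: sumr_ge0 => j _; apply: sumr_ge0 => l _;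
      rewrite le_max sqr_ge0.
  apply: ler_sum => i _; apply: ler_sum => j _; apply: ler_sum => l _.
  by apply: sq_box; [exact: lamB | exact: lam0B].
have sub0 : forall b : R, `[0, b] `<=` `[0, +oo[.
  by move=> b z; rewrite /= !in_itv /= => /andP [z0 _]; rewrite z0.
have mup : forall s, 0 <= s -> 0 < muh s.
  move=> s s0.
  have D : forall z, 0 < z < s -> exists2 dF, is_derive z 1 muh dF & 0 <= gam * muh z + dF.
    move=> z /andP [z0 _]; have [dz Dz] := mud z z0.
    exists ('D_1 muh z); first exact: derivableP.
    rewrite Dz.
    have : 0 <= gth * enorm (grad2 h (x z)) * norm_Omega_phi phi (x z).
      apply: mulr_ge0; [apply: mulr_ge0; [exact: ltW | exact: sqrtr_ge0] | exact: sqrtr_ge0].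
    lra.
  have G := @grow R muh gam s s0 (continuous_subspaceW (sub0 s) muc) D.
  have : 0 < expR (gam * s) * muh s by apply: lt_le_trans G.
  by rewrite pmulr_rgt0 // expR_gt0.
have nup : forall s, 0 <= s -> 0 < nuh s.
  move=> s s0.
  have D : forall z, 0 < z < s -> exists2 dF, is_derive z 1 nuh dF & 0 <= gam * nuh z + dF.
    move=> z /andP [z0 _]; have [dz Dz] := nud z z0.
    exists ('D_1 nuh z); first exact: derivableP.
    rewrite Dz.
    have : 0 <= gla * enorm (grad2 h (x z)) ^+ 2 * `|u0 (x z)| * norm_Omega_psi psi (x z).
      apply: mulr_ge0; last exact: sqrtr_ge0.
      apply: mulr_ge0 => //; apply: mulr_ge0; [exact: ltW | exact: sqr_ge0].
    lra.
  have G := @grow R nuh gam s s0 (continuous_subspaceW (sub0 s) nuc) D.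
  have : 0 < expR (gam * s) * nuh s by apply: lt_le_trans G.
  by rewrite pmulr_rgt0 // expR_gt0.
have hC : {within `[0, +oo[, continuous (fun s => h (x s))} := cont_comp_h hdiff xc.
have h0 : 0 < h (x 0).
  have a1 : 0 < (muh 0 ^+ 2 + mub ^+ 2) / (2 * gth).
    apply: divr_gt0; last by lra.
    have := exprn_gt0 2 mu0; have := sqr_ge0 mub; lra.
  have a2 : 0 <= (nuh 0 ^+ 2 + nub ^+ 2) / (2 * gla).
    apply: divr_ge0; last by lra.
    have := sqr_ge0 (nuh 0); have := sqr_ge0 nub; lra.
  lra.
move=> t tp; rewrite leNgt; apply/negP => ht.
pose A := [set s | 0 <= s /\ h (x s) < 0].
have Ane : A !=set0 by exists t; split => //; exact: ltW.
have Alb : lbound A 0 by move=> s [].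
have Ainf : has_inf A by split => //; exists 0.
set t0 := inf A.
have t00 : 0 <= t0 by apply: lb_le_inf.
have below : forall s, 0 <= s -> s < t0 -> 0 <= h (x s).
  move=> s s0 st; rewrite leNgt; apply/negP => hs.
  have : t0 <= s by apply: ge_inf; [exists 0 | split].
  by rewrite leNgt st.
have ht0 : h (x t0) <= 0.
  rewrite leNgt; apply/negP => hp.
  have [d d0 Hd] := pos_near hC t00 hp.
  have [a [a0 ha] ad] := inf_adherent d0 Ainf.
  have ta : t0 <= a by apply: ge_inf; [exists 0 | ].
  have : `|t0 - a| < d by rewrite ler0_norm ?subr_le0 // opprB; lra.
  move=> /(Hd a a0); lra.
have t0p : 0 < t0.
  rewrite lt_def t00 andbT; apply/eqP => t0z; move: ht0; rewrite t0z; lra.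
pose Bf := fun s => h (x s) - (mus - muh s) ^+ 2 / (2 * gth) - (nus - nuh s) ^+ 2 / (2 * gla).
have BC : {within `[0, t0], continuous Bf}.
  apply: (continuous_subspaceW (sub0 t0)) => s; rewrite /Bf.
  have c2 := cont_sq (c := mus) (k := 2 * gth) muc.
  have c3 := cont_sq (c := nus) (k := 2 * gla) nuc.
  exact: (continuousB (continuousB (hC s) (c2 s)) (c3 s)).
have BD : forall s, 0 < s < t0 -> exists2 dB, is_derive s 1 Bf dB & 0 <= gam * Bf s + dB.
  move=> s /andP [s0 st].
  have hs : 0 <= h (x s) := below s (ltW s0) st.
  have [dx Dx] := xd s s0.
  have [dm Dm] := mud s s0.
  have [dn Dn] := nud s s0.
  have Hx := der_hx (hdiff (x s)) dx.
  have Hm := der_sqk mus (2 * gth) (derivableP dm).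
  have Hn := der_sqk nus (2 * gla) (derivableP dn).
  eexists; first exact: (der_sub (der_sub Hx Hm) Hn).
  have [PD SB] := CX (x s) (sX (x s) hs).
  have PW := @pointwise R m n p q f fu fu_lo fu_hi phi th th0 g psi lam lam0 h bstar eps1 eps2
    (u0 (x s)) (muh s) (nuh s) (x s) ('D_1 x s) n0 (fuB (x s)) b0 PD SB
    (ltW (mup s (ltW s0))) (ltW (nup s (ltW s0))) e10 e20 Dx.
  rewrite -/mus -/nus in PW.
  have Q := u0K (x s) hs.
  rewrite /Bf.
  apply: (@final_ineq R gam gth gla (h (x s)) mus nus (muh s) (nuh s) mub nub
    (enorm (grad2 h (x s)) * norm_Omega_phi phi (x s))
    (enorm (grad2 h (x s)) ^+ 2 * `|u0 (x s)| * norm_Omega_psi psi (x s)) _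
    (Mfun h f fu_lo fu_hi (x s)) ((grad2 h (x s) *m f_theta phi th0 (x s)) 0 0)
    (((grad2 h (x s) *m (g (x s) + g_lambda psi lam0 (x s)) *m (grad2 h (x s))^T) 0 0)
       * u0 (x s)) (eps1 + eps2) ('D_1 muh s) ('D_1 nuh s)) => //.
  - by rewrite Dm mulrA.
  - by rewrite Dn !mulrA.
have G := @grow R Bf gam t0 t00 BC BD.
have f1 : (mus - muh 0) ^+ 2 / (2 * gth) <=
    (muh 0 ^+ 2 + mub ^+ 2) / (2 * gth) - mus * muh 0 / gth.
  have -> : (muh 0 ^+ 2 + mub ^+ 2) / (2 * gth) - mus * muh 0 / gth =
      (muh 0 ^+ 2 + mub ^+ 2 - 2 * mus * muh 0) / (2 * gth).
    by field; rewrite gt_eqF.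
  rewrite ler_pM2r ?invr_gt0; last by lra.
  nra.
have f2 : (nus - nuh 0) ^+ 2 / (2 * gla) <= (nuh 0 ^+ 2 + nub ^+ 2) / (2 * gla).
  rewrite ler_pM2r ?invr_gt0; last by lra.
  have := mulr_ge0 nus0 (ltW nu0); nra.
have B0 : mus * muh 0 / gth <= Bf 0 by rewrite /Bf; lra.
have f3 : 0 <= (nus - nuh t0) ^+ 2 / (2 * gla).
  by apply: divr_ge0; [exact: sqr_ge0 | lra].
have Bt0 : Bf t0 <= - ((mus - muh t0) ^+ 2 / (2 * gth)) by rewrite /Bf; lra.
have ep := expR_gt0 (gam * t0).
have [mz|mz] := eqVneq mus 0.
  have f4 : 0 < (mus - muh t0) ^+ 2 / (2 * gth).
    apply: divr_gt0; last by lra.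
    by rewrite mz sub0r sqrrN; apply: exprn_gt0; exact: mup.
  have : expR (gam * t0) * Bf t0 < 0 by rewrite pmulr_rlt0 //; lra.
  have : 0 <= Bf 0.
    by apply: le_trans B0; rewrite mz !mul0r.
  lra.
have mp : 0 < mus by rewrite lt_def mz mus0.
have : 0 < mus * muh 0 / gth by apply: divr_gt0 => //; apply: mulr_gt0.
have : expR (gam * t0) * Bf t0 <= 0.
  rewrite pmulr_rle0 //.
  have := sqr_ge0 (mus - muh t0).
  have : 0 <= (mus - muh t0) ^+ 2 / (2 * gth) by apply: divr_ge0; [exact: sqr_ge0 | lra].
  lra.
lra.
Qed.
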